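(* There is a neighborhood $U\subset\mathbb C_n$ of the image of $\gamma_0$ such that at every point of $U$ one has $\mathcal D_n+[\mathcal D_n,\mathcal D_n]=T\mathbb C_n$. That is, $\mathcal D_n$ is completely non-integrable on $U$ with growth vector $(n,2n-1)$; the vector fields $\xi_i$ together with their first commutators span the tangent spaces of $\mathbb C_n$.
   Context: Let $n\ge3$ and let $\mathcal P_n$ be the $2n$-dimensional manifold of convex $n$-gons in $\mathbb R^2$. A polygon is encoded by its side lines, cyclically ordered counterclockwise (indices mod $n$): $L_i=\{x\cos\alpha_i+y\sin\alpha_i=p_i\}$, with $(\cos\alpha_i,\sin\alpha_i)$ the outer unit normal. The coordinates are $(\alpha_i,p_i)$, with $0<\alpha_{i+1}-\alpha_i<\pi$ and total turning $2\pi$. Let $\mathcal D_n$ be the distribution spanned by the vector fields $\xi_i=\partial_{\alpha_i}+\Phi_i\,\partial_{p_i}$, $i=1,\dots,n$, where $$\Phi_i=\frac{\cos^2\!\big(\frac{\alpha_i-\alpha_{i-1}}2\big)(p_{i+1}+p_i)-\cos^2\!\big(\frac{\alpha_{i+1}-\alpha_i}2\big)(p_{i-1}+p_i)}{2\sin\!\big(\frac{\alpha_{i+1}-\alpha_{i-1}}2\big)\cos\!\big(\frac{\alpha_i-\alpha_{i-1}}2\big)\cos\!\big(\frac{\alpha_{i+1}-\alpha_i}2\big)}.$$ Geometrically, $\xi_i$ is the infinitesimal counterclockwise rotation of $L_i$ about the point $C_i$ where $L_i$ touches the circle tangent to $L_{i-1},L_i,L_{i+1}$. That circle lies on the polygon's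 side of $L_{i\pm1}$ and on the opposite side of $L_i$. $\mathcal D_n$ is tangent to the level sets of the perimeter $F$. Let $\mathbb C_n=\{F=2n\tan(\pi/n)\}$, a $(2n-1)$-dimensional submanifold of $\mathcal P_n$ carrying the $n$-dimensional distribution $\mathcal D_n$. Let $\gamma_0:[0,1]\to\mathbb C_n$ be the family of regular $n$-gons circumscribed about the unit circle centered at the origin: $\alpha_i(t)=\frac{2\pi}{n}(t+i-1)$, $p_i(t)=1$. *)

(* Defs.v *)
From Stdlib Require Import Reals.
From Coquelicot Require Import Coquelicot.
From mathcomp Require Import ssreflect ssrfun ssrbool eqtype ssrnat seq fintype bigop.

Set Implicit Arguments.
Unset Strict Implicit.

Local Open Scope R_scope.

(* Coordinates on P_n: inl i = alpha_i, inr i = p_i (0-indexed, i : 'I_n). *)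
Definition coord (n : nat) : finType := ('I_n + 'I_n)%type.
Definition pt (n : nat) := coord n -> R.

Definition alpha {n} (x : pt n) (i : 'I_n) : R := x (inl i).
Definition pp {n} (x : pt n) (i : 'I_n) : R := x (inr i).

Definition isucc {n} (i : 'I_n) : 'I_n := ordS i.
Definition ipred {n} (i : 'I_n) : 'I_n := ord_pred i.

(* d_i = alpha_{i+1} - alpha_i, where alpha_{n} := alpha_0 + 2 pi (total turning 2 pi) *)
Definition dal {n} (x : pt n) (i : 'I_n) : R :=
  alpha x (isucc i) - alpha x i + (if (val i).+1 == n then 2 * PI else 0).

(* vertex V_i = L_i /\ L_{i+1} *)
Definition vx {n} (x : pt n) (i : 'I_n) : R :=
  (pp x i * sin (alpha x (isucc i)) - pp x (isucc i) * sin (alpha x i)) / sin (dal x i).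
Definition vy {n} (x : pt n) (i : 'I_n) : R :=
  (pp x (isucc i) * cos (alpha x i) - pp x i * cos (alpha x (isucc i))) / sin (dal x i).

(* signed length of side i (from V_{i-1} to V_i, counterclockwise direction
   (-sin alpha_i, cos alpha_i)) *)
Definition sidelen {n} (x : pt n) (i : 'I_n) : R :=
  (vx x i - vx x (ipred i)) * (- sin (alpha x i))
  + (vy x i - vy x (ipred i)) * cos (alpha x i).

(* the coordinate domain P_n: consecutive outer normals turn by an angle in
   (0, pi), total turning 2 pi, and every side has positive length
   (so the lines are the sides of a convex n-gon in this cyclic order). *)
Definition in_Pn {n} (x : pt n) : Prop :=
  (forall i : 'I_n, 0 < dal x i < PI) /\ (forall i : 'I_n, 0 < sidelen x i).

Definition perimeter {n} (x : pt n) : R :=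
  \big[Rplus/0]_(i < n)
     sqrt ((vx x i - vx x (ipred i)) ^ 2 + (vy x i - vy x (ipred i)) ^ 2).

Definition in_Cn {n} (x : pt n) : Prop :=
  in_Pn x /\ perimeter x = 2 * INR n * tan (PI / INR n).

Definition Phi {n} (x : pt n) (i : 'I_n) : R :=
  let a := dal x (ipred i) in
  let b := dal x i in
  ((cos (a / 2)) ^ 2 * (pp x (isucc i) + pp x i)
     - (cos (b / 2)) ^ 2 * (pp x (ipred i) + pp x i))
  / (2 * sin ((a + b) / 2) * cos (a / 2) * cos (b / 2)).

Definition vfield (n : nat) := pt n -> pt n.

Definition xi {n} (i : 'I_n) : vfield n := fun x k =>
  match k with
  | inl j => if j == i then 1 else 0
  | inr j => if j == i then Phi x i else 0
  end.

Definition pd {n} (f : pt n -> R) (x : pt n) (j : coord n) : R :=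
  Derive (fun t => f (fun l => x l + (if l == j then t else 0))) 0.

Definition lie {n} (X Y : vfield n) : vfield n := fun x k =>
  \big[Rplus/0]_(j : coord n)
     (X x j * pd (fun y => Y y k) x j - Y x j * pd (fun y => X y k) x j).

(* T_x C_n = ker dF_x (directional derivative of the perimeter) *)
Definition tangentCn {n} (x : pt n) (v : pt n) : Prop :=
  Derive (fun t => perimeter (fun l => x l + t * v l)) 0 = 0.

Definition inD2 {n} (x : pt n) (v : pt n) : Prop :=
  exists (a : 'I_n -> R) (b : 'I_n -> 'I_n -> R), forall k : coord n,
    v k = \big[Rplus/0]_(i < n) (a i * xi i x k)
          + \big[Rplus/0]_(i < n) \big[Rplus/0]_(j < n) (b i j * lie (xi i) (xi j) x k).

(* gamma_0(t): alpha_i = 2 pi/n (t + i - 1) (1-indexed), p_i = 1 *)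
Definition gamma0 (n : nat) (t : R) : pt n := fun k =>
  match k with
  | inl i => 2 * PI / INR n * (t + INR (val i))
  | inr _ => 1
  end.

Definition open_pt {n} (U : pt n -> Prop) : Prop :=
  forall x, U x -> exists eps : R, 0 < eps /\
    forall y : pt n, (forall k, Rabs (y k - x k) < eps) -> U y.
Arguments gamma0 n t : clear implicits.

(* Main.v *)
Require Import Defs.
From Stdlib Require Import Reals Lra Psatz Lia.
From Coquelicot Require Import Coquelicot.
From HB Require Import structures.
From mathcomp Require Import ssreflect ssrfun ssrbool eqtype ssrnat seq div fintype bigop.
Set Implicit Arguments.
Unset Strict Implicit.
Local Open Scope R_scope.

Lemma Rplus_assoc' : associative Rplus. Proof. move=> *; rewrite Rplus_assoc //. Qed.
HB.instance Definition _ := Monoid.isComLaw.Build R 0%R Rplus Rplus_assoc' Rplus_comm Rplus_0_l.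

Notation "\Sum_ ( i < n ) F" := (\big[Rplus/0]_(i < n) F) (at level 41, F at level 41, i, n at level 50).

Lemma sumR_mull (I : Type) (r : seq I) (P : pred I) (a : R) (F : I -> R) :
  \big[Rplus/0]_(i <- r | P i) (a * F i) = a * \big[Rplus/0]_(i <- r | P i) F i.
Proof.
elim: r => [|x r IH]; first by rewrite !big_nil; ring.
rewrite !big_cons; case: (P x); rewrite IH //; ring.
Qed.

Lemma sumR_opp (I : Type) (r : seq I) (P : pred I) (F : I -> R) :
  \big[Rplus/0]_(i <- r | P i) (- F i) = - \big[Rplus/0]_(i <- r | P i) F i.
Proof.
elim: r => [|x r IH]; first by rewrite !big_nil; ring.
rewrite !big_cons; case: (P x); rewrite IH //; ring.
Qed.

Lemma sumR_minus (I : Type) (r : seq I) (P : pred I) (F G : I -> R) :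
  \big[Rplus/0]_(i <- r | P i) (F i - G i) =
  \big[Rplus/0]_(i <- r | P i) F i - \big[Rplus/0]_(i <- r | P i) G i.
Proof.
rewrite /Rminus big_split /= sumR_opp //.
Qed.

Lemma sumR_0 (I : Type) (r : seq I) (P : pred I) (F : I -> R) :
  (forall i, P i -> F i = 0) -> \big[Rplus/0]_(i <- r | P i) F i = 0.
Proof. move=> H; exact: big1. Qed.

Section Idx.
Variable n : nat.
Hypothesis hn : (3 <= n)%N.

Lemma succ_pred (i : 'I_n) : isucc (ipred i) = i. Proof. exact: ord_predK. Qed.
Lemma pred_succ (i : 'I_n) : ipred (isucc i) = i. Proof. exact: ordSK. Qed.

Lemma val_succ (i : 'I_n) : val (isucc i) = if (val i).+1 == n then 0%N else (val i).+1.
Proof.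
rewrite /isucc /ordS /=. case: eqP => [->|h]; first by rewrite modnn.
rewrite modn_small //. have := ltn_ord i. rewrite leq_eqVlt => /orP [/eqP//|//].
Qed.

Lemma succ_neq (i : 'I_n) : isucc i != i.
Proof.
apply/eqP => /(f_equal val); rewrite val_succ.
case: eqP => [h|h].
- move=> h0. have : n = 1%N by rewrite -h -h0. move=> e; move: hn; by rewrite e.
- move=> e. exact: (n_Sn _ (esym e)).
Qed.

Lemma succ2_neq (i : 'I_n) : isucc (isucc i) != i.
Proof.
apply/eqP => /(f_equal val); rewrite !val_succ.
have hi := ltn_ord i.
case: (eqVneq (val i).+1 n) => [h|h] /=.
- case: eqP => [h2|h2].
  + move=> _. have : n = 1%N by rewrite -h2. move=> e; move: hn; by rewrite e.
  + move=> h3. have : n = 2%N by rewrite -h h3. move=> e; move: hn; by rewrite e.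
- case: eqP => [h2|h2].
  + move=> h3. have : n = 2%N by rewrite -h2 -h3. move=> e; move: hn; by rewrite e.
  + move=> e. lia.
Qed.

Lemma pred_neq (i : 'I_n) : ipred i != i.
Proof.
apply/eqP => h. have := succ_neq (ipred i). by rewrite succ_pred h eqxx.
Qed.

Lemma pred_neq_succ (i : 'I_n) : ipred i != isucc i.
Proof.
apply/eqP => h. have := succ2_neq i. by rewrite -h succ_pred eqxx.
Qed.

Lemma sum_succ (F : 'I_n -> R) : \Sum_(i < n) F (isucc i) = \Sum_(i < n) F i.
Proof. by rewrite [RHS](reindex_inj (@ordS_inj n)). Qed.
Lemma sum_pred (F : 'I_n -> R) : \Sum_(i < n) F (ipred i) = \Sum_(i < n) F i.
Proof. by rewrite [RHS](reindex_inj (@ord_pred_inj n)). Qed.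

Lemma sum_ind (j : 'I_n) (F : 'I_n -> R) :
  \Sum_(i < n) ((if i == j then 1 else 0) * F i) = F j.
Proof.
rewrite (bigD1 j) //= eqxx big1 => [|i /= /negbTE ->]; ring.
Qed.
Lemma sum_ind' (j : 'I_n) (F : 'I_n -> R) :
  \Sum_(i < n) ((if j == i then 1 else 0) * F i) = F j.
Proof.
rewrite -(sum_ind j); apply: eq_bigr => i _; by rewrite eq_sym.
Qed.
End Idx.

Section Cont.
Variable n : nat.

Definition nb (x : pt n) (P : pt n -> Prop) : Prop :=
  exists eps : R, 0 < eps /\ forall y : pt n, (forall k, Rabs (y k - x k) < eps) -> P y.

Lemma nb_filter (x : pt n) : Filter (nb x).
Proof.
constructor.
- exists 1; split; [lra|done].
- move=> P Q [e1 [he1 H1]] [e2 [he2 H2]]. exists (Rmin e1 e2); split.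
  + by apply Rmin_pos.
  + move=> y hy; split; [apply H1|apply H2] => k; have := hy k;
    have := Rmin_l e1 e2; have := Rmin_r e1 e2; lra.
- move=> P Q hPQ [e [he H]]; exists e; split => // y hy; apply hPQ, H, hy.
Qed.

Global Existing Instance nb_filter.

Definition Ct (f : pt n -> R) (x : pt n) := filterlim f (nb x) (locally (f x)).

Lemma C_const (c : R) x : Ct (fun _ => c) x.
Proof. exact: filterlim_const. Qed.

Lemma C_coord k x : Ct (fun y => y k) x.
Proof.
apply/filterlim_locally => eps. exists eps; split; first by apply cond_pos.
move=> y hy. rewrite /ball /= /AbsRing_ball /abs /minus /plus /opp /=. apply hy.
Qed.

Lemma C_plus f g x : Ct f x -> Ct g x -> Ct (fun y => f y + g y) x.
Proof.
move=> hf hg. rewrite /Ct.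
eapply filterlim_comp_2; [exact hf | exact hg | ].
exact: (@filterlim_plus R_AbsRing R_NormedModule (f x) (g x)).
Qed.

Lemma C_mult f g x : Ct f x -> Ct g x -> Ct (fun y => f y * g y) x.
Proof.
move=> hf hg. rewrite /Ct.
eapply filterlim_comp_2; [exact hf | exact hg | ].
exact: (@filterlim_mult R_AbsRing (f x) (g x)).
Qed.

Lemma C_opp f x : Ct f x -> Ct (fun y => - f y) x.
Proof.
move=> hf. have h := C_mult (@C_const (-1) x) hf.
rewrite /Ct in h *. eapply filterlim_ext; last first.
- replace (- f x) with (-1 * f x) by ring. exact h.
- move=> y /=; ring.
Qed.

Lemma C_minus f g x : Ct f x -> Ct g x -> Ct (fun y => f y - g y) x.
Proof. move=> hf hg. exact: (C_plus hf (C_opp hg)). Qed.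

Lemma C_inv f x : f x <> 0 -> Ct f x -> Ct (fun y => / f y) x.
Proof.
move=> hx hf. rewrite /Ct.
eapply filterlim_comp; first exact hf.
have := @filterlim_Rbar_inv (f x).
rewrite /Rbar_inv /=. move=> H. apply H. by case.
Qed.

Lemma C_div f g x : g x <> 0 -> Ct f x -> Ct g x -> Ct (fun y => f y / g y) x.
Proof. move=> h hf hg. exact: (C_mult hf (C_inv h hg)). Qed.

Lemma C_comp (g : R -> R) f x : continuous g (f x) -> Ct f x -> Ct (fun y => g (f y)) x.
Proof. move=> hg hf. rewrite /Ct. eapply filterlim_comp; [exact hf| exact hg]. Qed.

Lemma C_sin f x : Ct f x -> Ct (fun y => sin (f y)) x.
Proof. apply C_comp, continuous_sin. Qed.
Lemma C_cos f x : Ct f x -> Ct (fun y => cos (f y)) x.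
Proof. apply C_comp, continuous_cos. Qed.

Lemma C_pow f x m : Ct f x -> Ct (fun y => f y ^ m) x.
Proof.
move=> hf; elim: m => [|m IH] /=; first exact: C_const.
exact: C_mult.
Qed.

Lemma C_ev_gt f x a : Ct f x -> a < f x -> nb x (fun y => a < f y).
Proof.
move=> hf ha. have := proj1 (@filterlim_locally _ _ _ (nb_filter x) f (f x)) hf (mkposreal _ (Rlt_Rminus _ _ ha)).
apply filter_imp => y. rewrite /ball /= /AbsRing_ball /abs /minus /plus /opp /=.
move=> h; have := Rabs_def2 _ _ h; lra.
Qed.

Lemma C_ev_lt f x a : Ct f x -> f x < a -> nb x (fun y => f y < a).
Proof.
move=> hf ha. have := proj1 (@filterlim_locally _ _ _ (nb_filter x) f (f x)) hf (mkposreal _ (Rlt_Rminus _ _ ha)).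
apply filter_imp => y. rewrite /ball /= /AbsRing_ball /abs /minus /plus /opp /=.
move=> h; have := Rabs_def2 _ _ h; lra.
Qed.

Lemma C_ev_neq f x : Ct f x -> f x <> 0 -> nb x (fun y => f y <> 0).
Proof.
move=> hf h. case: (Rlt_or_le 0 (f x)) => h0.
- apply: filter_imp (C_ev_gt hf h0) => y; lra.
- have h1 : f x < 0 by lra. apply: filter_imp (C_ev_lt hf h1) => y; lra.
Qed.
End Cont.

Lemma filter_forall_fin (T : Type) (F : (T -> Prop) -> Prop) (FF : Filter F)
  (I : finType) (P : I -> T -> Prop) :
  (forall i, F (P i)) -> F (fun y => forall i, P i y).
Proof.
move=> H.
suff : forall s : seq I, F (fun y => forall i, i \in s -> P i y).
  move=> /(_ (enum I)). apply filter_imp => y hy i. apply hy. by rewrite mem_enum.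
elim => [|a s IH].
- apply filter_forall => y i; by rewrite in_nil.
- apply: filter_imp (filter_and _ _ (H a) IH) => y [h1 h2] i.
  rewrite in_cons => /orP [/eqP ->//|]. exact: h2.
Qed.

Definition line {n} (x v : pt n) (t : R) : pt n := fun l => x l + t * v l.

Lemma line_lim n (x v : pt n) : filterlim (line x v) (locally 0) (nb x).
Proof.
move=> P [eps [he H]].
have : locally 0 (fun t => forall k, Rabs (t * v k) < eps).
  apply: filter_forall_fin => k.
  have hc : continuous (fun t => t * v k) 0.
    apply: (ex_derive_continuous (fun t => t * v k)). auto_derive; done.
  have := proj1 (@filterlim_locally _ _ _ (@filter_filter _ _ (locally_filter 0)) _ _) hc (mkposreal _ he).
  apply filter_imp => t. rewrite /ball /= /AbsRing_ball /abs /minus /plus /opp /=.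
  by rewrite Rmult_0_l Ropp_0 Rplus_0_r.
move=> hl; apply: (filter_imp _ _ _ hl) => t ht. apply H => k. rewrite /line.
replace (x k + t * v k - x k) with (t * v k) by ring. apply ht.
Qed.

Lemma sc1 x : sin x ^ 2 + cos x ^ 2 = 1.
Proof. have := sin2_cos2 x. rewrite /Rsqr. lra. Qed.

Lemma half_tan s c : s^2 + c^2 = 1 -> 0 < s ->
  c = (1 - ((1-c)/s)^2)/(1 + ((1-c)/s)^2) /\ s = 2*((1-c)/s)/(1 + ((1-c)/s)^2)
  /\ 0 < (1-c)/s.
Proof.
move=> h hs. set T := (1-c)/s.
have hTs : T*s = 1-c by rewrite /T; field; lra.
have hc1 : 0 < 1 - c by nra.
have hc2 : 0 < 1 + c by nra.
have hT0 : 0 < T by rewrite /T; apply Rdiv_lt_0_compat.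
have hT2 : T^2*(1+c) = 1-c.
  apply (Rmult_eq_reg_r (s^2)); last by nra.
  replace (T^2*(1+c)*s^2) with ((T*s)^2*(1+c)) by ring. rewrite hTs.
  replace (s^2) with ((1-c)*(1+c)) by lra. ring.
have hsT : T*(1+c) = s.
  apply (Rmult_eq_reg_r s); last lra.
  replace (T*(1+c)*s) with ((T*s)*(1+c)) by ring. rewrite hTs. nra.
split; [|split; [|done]].
- have e : c*(1+T^2) = 1 - T^2.
    replace (c*(1+T^2)) with (T^2*(1+c) - T^2 + c) by ring. rewrite hT2. ring.
  rewrite -e. field. nra.
- have e : s*(1+T^2) = 2*T.
    rewrite -hsT. replace (T*(1+c)*(1+T^2)) with (T*(1+c) + T*(T^2*(1+c))) by ring.
    rewrite hT2. ring.
  rewrite -e. field. nra.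
Qed.

Lemma cos_half2 a : cos (a/2) ^ 2 = (1 + cos a)/2.
Proof.
have := cos_2a_cos (a/2). replace (2*(a/2)) with a by field. move=> ->. field.
Qed.

Lemma den_id a b : 2 * sin ((a+b)/2) * cos (a/2) * cos (b/2) =
  (sin a * (1 + cos b) + sin b * (1 + cos a))/2.
Proof.
have e1 := sin_2a (a/2). have e2 := sin_2a (b/2).
have e3 := cos_2a_cos (a/2). have e4 := cos_2a_cos (b/2).
replace (2*(a/2)) with a in e1, e3 by field.
replace (2*(b/2)) with b in e2, e4 by field.
replace ((a+b)/2) with (a/2+b/2) by field.
rewrite sin_plus e1 e2 e3 e4. field.
Qed.

Definition Psi ca sa cb sb q0 q1 q2 : R :=
  ((1+ca)/2*(q2+q1) - (1+cb)/2*(q0+q1)) / ((sa*(1+cb) + sb*(1+ca))/2).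

Definition FF ta tb q0 q1 q2 : R :=
  ((q2+q1)*(1+tb^2) - (q0+q1)*(1+ta^2)) / (2*(ta+tb)).

Lemma PhiPsi n (y : pt n) i : Phi y i =
  Psi (cos (dal y (ipred i))) (sin (dal y (ipred i))) (cos (dal y i)) (sin (dal y i))
      (pp y (ipred i)) (pp y i) (pp y (isucc i)).
Proof.
rewrite /Phi /Psi; cbv zeta. rewrite !cos_half2 den_id. done.
Qed.

Lemma Psi_T Ta Tb q0 q1 q2 : 0 < Ta -> 0 < Tb ->
  Psi ((1-Ta^2)/(1+Ta^2)) (2*Ta/(1+Ta^2)) ((1-Tb^2)/(1+Tb^2)) (2*Tb/(1+Tb^2)) q0 q1 q2
  = FF Ta Tb q0 q1 q2.
Proof.
move=> ha hb. rewrite /Psi /FF. field. repeat split; try nra.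
Qed.

Definition Tv n (x : pt n) (k : 'I_n) : R := (1 - cos (dal x k)) / sin (dal x k).
Definition goodx n (x : pt n) : Prop := forall k, 0 < dal x k < PI.

Lemma good_T n (x : pt n) k : 0 < dal x k < PI ->
  cos (dal x k) = (1 - Tv x k ^2)/(1 + Tv x k ^2) /\
  sin (dal x k) = 2 * Tv x k/(1 + Tv x k ^2) /\ 0 < Tv x k.
Proof.
move=> [h1 h2]. have hs := sin_gt_0 _ h1 h2.
have := half_tan (sc1 (dal x k)) hs. by rewrite /Tv.
Qed.

Lemma Phi_T n (x : pt n) i : 0 < dal x (ipred i) < PI -> 0 < dal x i < PI ->
  Phi x i = FF (Tv x (ipred i)) (Tv x i) (pp x (ipred i)) (pp x i) (pp x (isucc i)).
Proof.
move=> h1 h2. have [c1 [s1 t1]] := good_T h1. have [c2 [s2 t2]] := good_T h2.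
rewrite PhiPsi c1 s1 c2 s2 Psi_T //.
Qed.

Lemma cos_dal n (y : pt n) i :
  cos (dal y i) = cos (alpha y (isucc i)) * cos (alpha y i) + sin (alpha y (isucc i)) * sin (alpha y i).
Proof.
rewrite /dal -cos_minus. case: (_ == _); last by rewrite Rplus_0_r.
by rewrite cos_plus cos_2PI sin_2PI; ring.
Qed.

Lemma sin_dal n (y : pt n) i :
  sin (dal y i) = sin (alpha y (isucc i)) * cos (alpha y i) - cos (alpha y (isucc i)) * sin (alpha y i).
Proof.
rewrite /dal -sin_minus. case: (_ == _); last by rewrite Rplus_0_r.
by rewrite sin_plus cos_2PI sin_2PI; ring.
Qed.

Definition Lf ca sa cb sb qm q qp : R := (qp - q*cb)/sb + (qm - q*ca)/sa.

Section SL.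
Variable n : nat.
Hypothesis hn : (3 <= n)%N.

Lemma sidelen_Lf (y : pt n) i : sin (dal y i) <> 0 -> sin (dal y (ipred i)) <> 0 ->
  sidelen y i = Lf (cos (dal y (ipred i))) (sin (dal y (ipred i))) (cos (dal y i)) (sin (dal y i))
      (pp y (ipred i)) (pp y i) (pp y (isucc i)).
Proof.
rewrite /sidelen /vx /vy /Lf !cos_dal !sin_dal !succ_pred.
set s0 := sin (alpha y (ipred i)). set c0 := cos (alpha y (ipred i)).
set s1 := sin (alpha y i). set c1 := cos (alpha y i).
set s2 := sin (alpha y (isucc i)). set c2 := cos (alpha y (isucc i)).
move=> h1 h0.
have e : s1^2 + c1^2 = 1 by apply sc1.
transitivity ((pp y (isucc i) * (s1^2+c1^2) - pp y i * (c2*c1 + s2*s1))/(s2*c1 - c2*s1)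
  + (pp y (ipred i) * (s1^2+c1^2) - pp y i * (c1*c0 + s1*s0))/(s1*c0 - c1*s0)).
- field. by split.
- by rewrite e !Rmult_1_r.
Qed.

Lemma side_sqrt (y : pt n) i : sin (dal y i) <> 0 -> sin (dal y (ipred i)) <> 0 ->
  sqrt ((vx y i - vx y (ipred i)) ^ 2 + (vy y i - vy y (ipred i)) ^ 2) = Rabs (sidelen y i).
Proof.
move=> h1 h0. rewrite -sqrt_Rsqr_abs. f_equal.
move: h1 h0.
rewrite /sidelen /vx /vy !sin_dal !succ_pred /Rsqr.
set s0 := sin (alpha y (ipred i)). set c0 := cos (alpha y (ipred i)).
set s1 := sin (alpha y i). set c1 := cos (alpha y i).
set s2 := sin (alpha y (isucc i)). set c2 := cos (alpha y (isucc i)).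
move=> h1 h0.
have e : s1^2 + c1^2 = 1 by apply sc1.
set dx := _ - _. set dy := _ - _.
have hn0 : dx * c1 + dy * s1 = 0.
  rewrite /dx /dy. field. by split.
transitivity ((dx*c1 + dy*s1)^2 + (dx * - s1 + dy * c1) * (dx * - s1 + dy * c1)).
- have : dx^2 + dy^2 = (dx^2+dy^2)*(s1^2+c1^2) by rewrite e; ring.
  move=> ->. ring.
- rewrite hn0. ring.
Qed.
End SL.

Ltac Cstep := match goal with
 | |- Ct (fun y => _ + _) _ => apply C_plus
 | |- Ct (fun y => _ - _) _ => apply C_minus
 | |- Ct (fun y => _ / _) _ => apply C_div
 | |- Ct (fun y => _ * _) _ => apply C_mult
 | |- Ct (fun y => - _) _ => apply C_opp
 | |- Ct (fun y => sin _) _ => apply C_sin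
 | |- Ct (fun y => cos _) _ => apply C_cos
 | |- Ct (fun y => _ ^ _) _ => apply C_pow
 | |- Ct (fun y => y _) _ => apply C_coord
 | |- Ct (fun y => ?c) _ => apply C_const
 end.
Ltac Csolve := repeat Cstep.
Ltac toR := match goal with |- @eq _ ?a ?b => change (@eq R a b) end.

Lemma C_dal n (x : pt n) i : Ct (fun y => dal y i) x.
Proof. rewrite /dal /alpha. Csolve. Qed.

Lemma C_sidelen n (x : pt n) i : sin (dal x i) <> 0 -> sin (dal x (ipred i)) <> 0 ->
  Ct (fun y => sidelen y i) x.
Proof.
rewrite /sidelen /vx /vy /dal /pp /alpha.
move=> h1 h2. Csolve; try exact h1; try exact h2.
Qed.

Lemma is_derive_sum (I : Type) (r : seq I) (P : pred I) (f : I -> R -> R) (d : I -> R) t0 :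
  (forall i, P i -> is_derive (f i) t0 (d i)) ->
  is_derive (fun t => \big[Rplus/0]_(i <- r | P i) f i t) t0 (\big[Rplus/0]_(i <- r | P i) d i).
Proof.
move=> H. elim: r => [|a r IH].
- rewrite big_nil. apply: is_derive_ext; last exact: (is_derive_const 0 t0).
  move=> t /=; by rewrite big_nil.
- rewrite big_cons. case hP: (P a).
  + apply: is_derive_ext; last exact: (is_derive_plus _ _ _ _ _ (H a hP) IH).
    move=> t /=; by rewrite big_cons hP.
  + apply: is_derive_ext; last exact: IH. move=> t /=; by rewrite big_cons hP.
Qed.

Definition dhT T q q' d w w' : R :=
  (w'*(1+T^2) - w*(1-T^2))/(2*T) + d*(q*(1+T^2)^2 - q'*(1-T^2)*(1+T^2))/(4*T^2).

Lemma Lf_deriv A B Ta Tb da db qm q qp wm w wp :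
  cos A = (1-Ta^2)/(1+Ta^2) -> sin A = 2*Ta/(1+Ta^2) -> 0 < Ta ->
  cos B = (1-Tb^2)/(1+Tb^2) -> sin B = 2*Tb/(1+Tb^2) -> 0 < Tb ->
  is_derive (fun t => Lf (cos (A + t*da)) (sin (A + t*da)) (cos (B + t*db)) (sin (B+t*db))
     (qm + t*wm) (q + t*w) (qp + t*wp)) 0 (dhT Tb q qp db w wp + dhT Ta q qm da w wm).
Proof.
move=> cA sA hA cB sB hB. rewrite /Lf.
auto_derive.
- rewrite !Rmult_0_l !Rplus_0_r sA sB. split; [|split=>//]; apply Rgt_not_eq;
  apply Rdiv_lt_0_compat; nra.
- rewrite !Rmult_0_l !Rplus_0_r sA sB cA cB /dhT. field. nra.
Qed.

Section Per.
Variable n : nat.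
Hypothesis hn : (3 <= n)%N.

Lemma dal_line (x v : pt n) t i :
  dal (line x v t) i = dal x i + t * (v (inl (isucc i)) - v (inl i)).
Proof. rewrite /dal /alpha /line. ring. Qed.

Lemma pp_line (x v : pt n) t i : pp (line x v t) i = pp x i + t * v (inr i).
Proof. by rewrite /pp /line. Qed.

Definition dA (v : pt n) (k : 'I_n) := v (inl (isucc k)) - v (inl k).

Definition perD (x v : pt n) : R :=
  \Sum_(i < n) (dhT (Tv x i) (pp x i) (pp x (isucc i)) (dA v i) (v (inr i)) (v (inr (isucc i)))
   + dhT (Tv x (ipred i)) (pp x i) (pp x (ipred i)) (dA v (ipred i)) (v (inr i)) (v (inr (ipred i)))).

Lemma per_deriv (x v : pt n) : in_Pn x ->
  is_derive (fun t => perimeter (line x v t)) 0 (perD x v).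
Proof.
move=> [hd hs].
have hsin : forall i, sin (dal x i) <> 0.
  move=> i; apply Rgt_not_eq; case: (hd i) => h1 h2; exact: sin_gt_0.
have ev : locally 0 (fun t => forall i, sin (dal (line x v t) i) <> 0 /\ 0 < sidelen (line x v t) i).
  apply: (@line_lim n x v (fun y => forall i, sin (dal y i) <> 0 /\ 0 < sidelen y i)). apply: (@filter_forall_fin _ _ (nb_filter x)) => i. apply: (@filter_and _ _ (nb_filter x)).
  - apply: (@C_ev_neq n (fun y => sin (dal y i))); last exact: hsin.
    apply C_sin, C_dal.
  - apply: (@C_ev_gt n (fun y => sidelen y i)); last exact: hs.
    apply C_sidelen; exact: hsin.
pose LL := fun i t => Lf (cos (dal x (ipred i) + t * dA v (ipred i))) (sin (dal x (ipred i) + t * dA v (ipred i)))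
  (cos (dal x i + t * dA v i)) (sin (dal x i + t * dA v i))
  (pp x (ipred i) + t * v (inr (ipred i))) (pp x i + t * v (inr i)) (pp x (isucc i) + t * v (inr (isucc i))).
apply: (is_derive_ext_loc (fun t => \Sum_(i < n) LL i t)); last first.
- apply: is_derive_sum => i _.
  have [c1 [s1 t1]] := good_T (hd i). have [c2 [s2 t2]] := good_T (hd (ipred i)).
  exact: (@Lf_deriv (dal x (ipred i)) (dal x i) (Tv x (ipred i)) (Tv x i) (dA v (ipred i)) (dA v i)
      (pp x (ipred i)) (pp x i) (pp x (isucc i)) (v (inr (ipred i))) (v (inr i)) (v (inr (isucc i)))
      c2 s2 t2 c1 s1 t1).
- apply: filter_imp ev => t ht. rewrite /perimeter. apply: eq_bigr => i _.
  case: (ht i) => h1 h2. case: (ht (ipred i)) => h3 _.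
  rewrite side_sqrt // Rabs_pos_eq; last lra.
  rewrite sidelen_Lf // !dal_line !pp_line. done.
Qed.

Definition Lform (x v : pt n) : R :=
  \Sum_(m < n) ((Tv x (ipred m) + Tv x m) * (v (inr m) - Phi x m * v (inl m))).

Lemma perD_Lform (x v : pt n) : goodx x -> perD x v = Lform x v.
Proof.
move=> hg.
have hT : forall k, 0 < Tv x k by move=> k; case: (good_T (hg k)) => _ [].
rewrite /perD big_split /=.
set g := fun k => dhT (Tv x k) (pp x (isucc k)) (pp x k) (dA v k) (v (inr (isucc k))) (v (inr k)).
transitivity (\Sum_(i < n) dhT (Tv x i) (pp x i) (pp x (isucc i)) (dA v i) (v (inr i)) (v (inr (isucc i)))
  + \Sum_(i < n) g i).
  f_equal. rewrite -(sum_pred g). apply: eq_bigr => i _. by rewrite /g succ_pred.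
rewrite -big_split /=.
set W := fun k => (pp x k + pp x (isucc k)) * (1 + Tv x k ^ 2) / 2.
set G := fun k => Tv x k * v (inr k) - W k * v (inl k).
set F1 := fun k => Tv x k * v (inr (isucc k)) + W k * v (inl (isucc k)).
transitivity (\Sum_(i < n) (G i + F1 i)).
  apply: eq_bigr => i _. toR. rewrite /g /G /F1 /W /dhT /dA. have := hT i. move=> h. move: (v (inl i)) (v (inl (isucc i))) (v (inr i)) (v (inr (isucc i))) (pp x i) (pp x (isucc i)) => a1 a2 a3 a4 a5 a6. move: (Tv x i) h => T h. field. lra.
rewrite big_split /= -(sum_pred F1) -big_split /=.
apply: eq_bigr => m _. toR. rewrite /G /F1 /W succ_pred Phi_T; try exact: hg.
have h1 := hT m. have h2 := hT (ipred m). rewrite /FF. field. lra.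
Qed.

Lemma tangent_iff (x v : pt n) : in_Pn x -> (tangentCn x v <-> Lform x v = 0).
Proof.
move=> hP. rewrite /tangentCn.
have -> : Derive (fun t => perimeter (fun l => x l + t * v l)) 0 = perD x v.
  apply is_derive_unique. exact: per_deriv.
rewrite perD_Lform //. by case: hP => hd _.
Qed.
End Per.

Definition NN ta tb q0 q1 q2 : R := (q2+q1)*(1+tb^2) - (q0+q1)*(1+ta^2).
Definition Fta ta tb q0 q1 q2 : R := (-(q0+q1)*2*ta*(ta+tb) - NN ta tb q0 q1 q2)/(2*(ta+tb)^2).
Definition Ftb ta tb q0 q1 q2 : R := ((q2+q1)*2*tb*(ta+tb) - NN ta tb q0 q1 q2)/(2*(ta+tb)^2).
Definition Fq0 ta tb : R := -(1+ta^2)/(2*(ta+tb)).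
Definition Fq1 ta tb : R := ((1+tb^2) - (1+ta^2))/(2*(ta+tb)).
Definition Fq2 ta tb : R := (1+tb^2)/(2*(ta+tb)).

Lemma Psi_deriv A B Ta Tb s1 s2 q0 q1 q2 r0 r1 r2 :
  cos A = (1-Ta^2)/(1+Ta^2) -> sin A = 2*Ta/(1+Ta^2) -> 0 < Ta ->
  cos B = (1-Tb^2)/(1+Tb^2) -> sin B = 2*Tb/(1+Tb^2) -> 0 < Tb ->
  is_derive (fun t => Psi (cos (A + t*s1)) (sin (A + t*s1)) (cos (B + t*s2)) (sin (B+t*s2))
     (q0 + t*r0) (q1 + t*r1) (q2 + t*r2)) 0
   (s1 * Fta Ta Tb q0 q1 q2 * (1+Ta^2)/2 + s2 * Ftb Ta Tb q0 q1 q2 * (1+Tb^2)/2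
    + r0 * Fq0 Ta Tb + r1 * Fq1 Ta Tb + r2 * Fq2 Ta Tb).
Proof.
move=> cA sA hA cB sB hB. rewrite /Psi.
auto_derive.
- rewrite !Rmult_0_l !Rplus_0_r sA sB cA cB. apply Rgt_not_eq.
  have h1 : 0 < 2 * Ta / (1 + Ta ^ 2) * (1 + (1 - Tb ^ 2) / (1 + Tb ^ 2)).
    apply Rmult_lt_0_compat; [apply Rdiv_lt_0_compat; nra|].
    replace (1 + (1 - Tb ^ 2) / (1 + Tb ^ 2)) with (2/(1+Tb^2)) by (field; nra).
    apply Rdiv_lt_0_compat; nra.
  have h2 : 0 < 2 * Tb / (1 + Tb ^ 2) * (1 + (1 - Ta ^ 2) / (1 + Ta ^ 2)).
    apply Rmult_lt_0_compat; [apply Rdiv_lt_0_compat; nra|].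
    replace (1 + (1 - Ta ^ 2) / (1 + Ta ^ 2)) with (2/(1+Ta^2)) by (field; nra).
    apply Rdiv_lt_0_compat; nra.
  lra.
- rewrite !Rmult_0_l !Rplus_0_r sA sB cA cB /Fta /Ftb /Fq0 /Fq1 /Fq2 /NN. field.
  split; nra.
Qed.

Definition indR (b : bool) : R := if b then 1 else 0.

Definition shift {n} (x : pt n) (j : coord n) (t : R) : pt n :=
  fun l => x l + (if l == j then t else 0).

Section Brk.
Variable n : nat.
Hypothesis hn : (3 <= n)%N.

Lemma inl_eq (a b : 'I_n) : (inl a == inl b :> coord n) = (a == b).
Proof. by apply/eqP/eqP => [[]|->]. Qed.
Lemma inr_eq (a b : 'I_n) : (inr a == inr b :> coord n) = (a == b).
Proof. by apply/eqP/eqP => [[]|->]. Qed.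
Lemma inlr_eq (a b : 'I_n) : (inl a == inr b :> coord n) = false.
Proof. by apply/eqP. Qed.
Lemma inrl_eq (a b : 'I_n) : (inr a == inl b :> coord n) = false.
Proof. by apply/eqP. Qed.

Lemma dal_shift_l (x : pt n) i t k :
  dal (shift x (inl i) t) k = dal x k + t * (indR (isucc k == i) - indR (k == i)).
Proof. rewrite /dal /alpha /shift /indR /= !inl_eq. case: (_ == i); case: (_ == i); ring. Qed.
Lemma pp_shift_l (x : pt n) i t k : pp (shift x (inl i) t) k = pp x k + t * 0.
Proof. rewrite /pp /shift /=. case: (@eqP (coord n) (inr k) (inl i)) => [//|_]. ring. Qed.
Lemma dal_shift_r (x : pt n) i t k : dal (shift x (inr i) t) k = dal x k + t * 0.
Proof. rewrite /dal /alpha /shift /=. case: (@eqP (coord n) (inl (isucc k)) (inr i)) => [//|_]. case: (@eqP (coord n) (inl k) (inr i)) => [//|_]. ring. Qed.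
Lemma pp_shift_r (x : pt n) i t k : pp (shift x (inr i) t) k = pp x k + t * indR (k == i).
Proof. rewrite /pp /shift /indR /= inr_eq. case: (_ == i); ring. Qed.

Definition DAj (x : pt n) j := Fta (Tv x (ipred j)) (Tv x j) (pp x (ipred j)) (pp x j) (pp x (isucc j)) * (1 + Tv x (ipred j) ^ 2) / 2.
Definition DBj (x : pt n) j := Ftb (Tv x (ipred j)) (Tv x j) (pp x (ipred j)) (pp x j) (pp x (isucc j)) * (1 + Tv x j ^ 2) / 2.

Lemma pd_Phi_l (x : pt n) j i : goodx x ->
  pd (fun y => Phi y j) x (inl i) =
  (indR (j == i) - indR (ipred j == i)) * DAj x j + (indR (isucc j == i) - indR (j == i)) * DBj x j
  + 0 * Fq0 (Tv x (ipred j)) (Tv x j) + 0 * Fq1 (Tv x (ipred j)) (Tv x j) + 0 * Fq2 (Tv x (ipred j)) (Tv x j).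
Proof.
move=> hg. rewrite /pd. apply is_derive_unique.
have [c1 [s1 t1]] := good_T (hg (ipred j)). have [c2 [s2 t2]] := good_T (hg j).
have := @Psi_deriv _ _ _ _ (indR (j == i) - indR (ipred j == i)) (indR (isucc j == i) - indR (j == i))
   (pp x (ipred j)) (pp x j) (pp x (isucc j)) 0 0 0 c1 s1 t1 c2 s2 t2.
rewrite /DAj /DBj. rewrite -!Rmult_assoc.
apply: is_derive_ext => t. rewrite (PhiPsi (shift x (inl i) t)).
rewrite !dal_shift_l !pp_shift_l succ_pred. done.
Qed.

Lemma pd_Phi_r (x : pt n) j i : goodx x ->
  pd (fun y => Phi y j) x (inr i) =
  0 * DAj x j + 0 * DBj x j
  + indR (ipred j == i) * Fq0 (Tv x (ipred j)) (Tv x j) + indR (j == i) * Fq1 (Tv x (ipred j)) (Tv x j)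
  + indR (isucc j == i) * Fq2 (Tv x (ipred j)) (Tv x j).
Proof.
move=> hg. rewrite /pd. apply is_derive_unique.
have [c1 [s1 t1]] := good_T (hg (ipred j)). have [c2 [s2 t2]] := good_T (hg j).
have := @Psi_deriv _ _ _ _ 0 0
   (pp x (ipred j)) (pp x j) (pp x (isucc j)) (indR (ipred j == i)) (indR (j == i)) (indR (isucc j == i))
   c1 s1 t1 c2 s2 t2.
rewrite /DAj /DBj. rewrite -!Rmult_assoc.
apply: is_derive_ext => t. rewrite (PhiPsi (shift x (inr i) t)).
rewrite !dal_shift_r !pp_shift_r. done.
Qed.
End Brk.

Section Lie.
Variable n : nat.
Hypothesis hn : (3 <= n)%N.

Lemma pd_const (f : pt n -> R) c x l : (forall y, f y = c) -> pd f x l = 0.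
Proof.
move=> h. rewrite /pd. rewrite (Derive_ext _ (fun _ => c)); first exact: Derive_const.
move=> t; exact: h.
Qed.

Lemma pd_xi_l j m (x : pt n) l : pd (fun y => xi j y (inl m)) x l = 0.
Proof. by apply: (pd_const (c := if m == j then 1 else 0)). Qed.

Lemma pd_xi_r j m (x : pt n) l :
  pd (fun y => xi j y (inr m)) x l = indR (m == j) * pd (fun y => Phi y j) x l.
Proof.
rewrite /xi /indR. case: (m == j); first by rewrite Rmult_1_l.
rewrite Rmult_0_l. by apply: (pd_const (c := 0)).
Qed.

Lemma sum_coord (F : coord n -> R) :
  \big[Rplus/0]_(j : coord n) F j = \Sum_(l < n) F (inl l) + \Sum_(l < n) F (inr l).
Proof. by rewrite big_sumType. Qed.

Lemma lie_inl i j (x : pt n) m : lie (xi i) (xi j) x (inl m) = 0.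
Proof.
rewrite /lie. apply: big1 => l _. rewrite !pd_xi_l. ring.
Qed.

Definition Xpd (x : pt n) i j :=
  pd (fun y => Phi y j) x (inl i) + Phi x i * pd (fun y => Phi y j) x (inr i).

Lemma lie_inr i j (x : pt n) m :
  lie (xi i) (xi j) x (inr m) = indR (m == j) * Xpd x i j - indR (m == i) * Xpd x j i.
Proof.
rewrite /lie sum_coord.
have E1 : \Sum_(l < n) (xi i x (inl l) * pd (fun y => xi j y (inr m)) x (inl l)
      - xi j x (inl l) * pd (fun y => xi i y (inr m)) x (inl l))
   = indR (m == j) * pd (fun y => Phi y j) x (inl i) - indR (m == i) * pd (fun y => Phi y i) x (inl j).
  transitivity (\Sum_(l < n) ((if l == i then 1 else 0) * (indR (m == j) * pd (fun y => Phi y j) x (inl l))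
      - (if l == j then 1 else 0) * (indR (m == i) * pd (fun y => Phi y i) x (inl l)))).
    apply: eq_bigr => l _. by rewrite !pd_xi_r.
  by rewrite sumR_minus !sum_ind.
have E2 : \Sum_(l < n) (xi i x (inr l) * pd (fun y => xi j y (inr m)) x (inr l)
      - xi j x (inr l) * pd (fun y => xi i y (inr m)) x (inr l))
   = Phi x i * (indR (m == j) * pd (fun y => Phi y j) x (inr i))
     - Phi x j * (indR (m == i) * pd (fun y => Phi y i) x (inr j)).
  transitivity (\Sum_(l < n) ((if l == i then 1 else 0) * (Phi x i * (indR (m == j) * pd (fun y => Phi y j) x (inr l)))
      - (if l == j then 1 else 0) * (Phi x j * (indR (m == i) * pd (fun y => Phi y i) x (inr l))))).
    apply: eq_bigr => l _. toR. rewrite !pd_xi_r /=.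
    case: (l == i); case: (l == j); ring.
  by rewrite sumR_minus !sum_ind.
rewrite E1 E2 /Xpd.
have gen : forall a b c d e f g h : R, a*b - c*d + (e*(a*f) - g*(c*h)) = a*(b+e*f) - c*(d+g*h).
  move=> *; ring.
apply: gen.
Qed.
End Lie.

Lemma key_rat tp ti ts p0 p1 p2 p3 : 0 < tp -> 0 < ti -> 0 < ts ->
  (ti + ts) * (((0 - 1) * (Fta ti ts p1 p2 p3 * (1 + ti^2)/2) + (0 - 0) * (Ftb ti ts p1 p2 p3 * (1 + ts^2)/2)
     + 0 * Fq0 ti ts + 0 * Fq1 ti ts + 0 * Fq2 ti ts)
   + FF tp ti p0 p1 p2 * (0 * (Fta ti ts p1 p2 p3 * (1 + ti^2)/2) + 0 * (Ftb ti ts p1 p2 p3 * (1 + ts^2)/2)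
     + 1 * Fq0 ti ts + 0 * Fq1 ti ts + 0 * Fq2 ti ts))
  = (tp + ti) * (((0 - 0) * (Fta tp ti p0 p1 p2 * (1 + tp^2)/2) + (1 - 0) * (Ftb tp ti p0 p1 p2 * (1 + ti^2)/2)
     + 0 * Fq0 tp ti + 0 * Fq1 tp ti + 0 * Fq2 tp ti)
   + FF ti ts p1 p2 p3 * (0 * (Fta tp ti p0 p1 p2 * (1 + tp^2)/2) + 0 * (Ftb tp ti p0 p1 p2 * (1 + ti^2)/2)
     + 0 * Fq0 tp ti + 0 * Fq1 tp ti + 1 * Fq2 tp ti)).
Proof.
move=> h1 h2 h3. rewrite /Fta /Ftb /Fq0 /Fq1 /Fq2 /FF /NN. field. lra.
Qed.

Section Key.
Variable n : nat.
Hypothesis hn : (3 <= n)%N.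

Lemma adj_case (x : pt n) i : goodx x ->
  (Tv x (ipred (isucc i)) + Tv x (isucc i)) * Xpd x i (isucc i) =
  (Tv x (ipred i) + Tv x i) * Xpd x (isucc i) i.
Proof.
move=> hg. rewrite /Xpd !pd_Phi_l // !pd_Phi_r //.
have e1 : (isucc i == i) = false by apply: negbTE; exact: succ_neq.
have e2 : (isucc (isucc i) == i) = false by apply: negbTE; exact: succ2_neq.
have e3 : (i == isucc i) = false by rewrite eq_sym.
have e4 : (ipred i == isucc i) = false by apply: negbTE; exact: pred_neq_succ.
rewrite /indR !pred_succ !eqxx e1 e2 e3 e4.
rewrite (Phi_T (hg _) (hg _)) (Phi_T (hg _) (hg _)) !pred_succ /DAj /DBj !pred_succ.
have t0 : 0 < Tv x (ipred i) by case: (good_T (hg (ipred i))) => _ [].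
have t1 : 0 < Tv x i by case: (good_T (hg i)) => _ [].
have t2 : 0 < Tv x (isucc i) by case: (good_T (hg (isucc i))) => _ [].
move: (Tv x (ipred i)) (Tv x i) (Tv x (isucc i)) t0 t1 t2
  (pp x (ipred i)) (pp x i) (pp x (isucc i)) (pp x (isucc (isucc i))) => a b c ha hb hc q0 q1 q2 q3.
rewrite /Fta /Ftb /Fq0 /Fq1 /Fq2 /FF /NN. rewrite /indR. field. lra.
Qed.
End Key.

Section Key2.
Variable n : nat.
Hypothesis hn : (3 <= n)%N.

Lemma key_sym (x : pt n) i j : goodx x ->
  (Tv x (ipred j) + Tv x j) * Xpd x i j = (Tv x (ipred i) + Tv x i) * Xpd x j i.
Proof.
move=> hg.
case: (eqVneq i j) => [<-|hij]; first done.
case: (eqVneq j (isucc i)) => [->|hj]; first exact: adj_case.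
case: (eqVneq i (isucc j)) => [->|hi]; first by symmetry; exact: adj_case.
rewrite /Xpd !pd_Phi_l // !pd_Phi_r //.
have e1 : (j == i) = false by rewrite eq_sym; apply: negbTE.
have e2 : (ipred j == i) = false.
  apply/negP => /eqP h; move: hj; by rewrite -h succ_pred eqxx.
have e3 : (isucc j == i) = false by rewrite eq_sym; apply: negbTE.
have e4 : (i == j) = false by apply: negbTE.
have e5 : (ipred i == j) = false.
  apply/negP => /eqP h; move: hi; by rewrite -h succ_pred eqxx.
have e6 : (isucc i == j) = false by rewrite eq_sym; apply: negbTE.
rewrite e1 e2 e3 e4 e5 e6 /indR. ring.
Qed.
End Key2.

Section LA.
Variable n : nat.
Hypothesis hn : (3 <= n)%N.

Lemma val_pred (m : 'I_n) :
  val (ipred m) = if val m == 0%N then n.-1 else (val m).-1.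
Proof.
have := val_succ (ipred m). rewrite succ_pred.
case E: ((val (ipred m)).+1 == n) => ->.
- move/eqP: E => E. by rewrite -[in RHS]E.
- done.
Qed.

Lemma prefix_diff (u : 'I_n -> R) (m : 'I_n) : \Sum_(k < n) u k = 0 ->
  (- \big[Rplus/0]_(k < n | (k <= ipred m)%N) u k) - (- \big[Rplus/0]_(k < n | (k <= m)%N) u k) = u m.
Proof.
move=> h0. have hv := val_pred m.
have hn0 : (0 < n)%N by apply: leq_trans hn.
case: (eqVneq (val m) 0%N) hv => hm hv.
- rewrite hv.
  have -> : \big[Rplus/0]_(k < n | (k <= n.-1)%N) u k = \Sum_(k < n) u k.
    apply: eq_bigl => k. by rewrite -(ltnS k (n.-1)) (ltn_predK (ltn_ord k)) ltn_ord.
  have -> : \big[Rplus/0]_(k < n | (k <= m)%N) u k = \big[Rplus/0]_(k < n | k == m) u k.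
    apply: eq_bigl => k. rewrite hm leqn0. apply/eqP/eqP => [h|->//].
    by apply: val_inj; rewrite /= h hm.
  rewrite big_pred1_eq h0. toR. ring.
- have -> : \big[Rplus/0]_(k < n | (k <= m)%N) u k =
            u m + \big[Rplus/0]_(k < n | (k <= m)%N && (k != m)) u k.
    by rewrite (bigD1 m) //=.
  have -> : \big[Rplus/0]_(k < n | (k <= ipred m)%N) u k =
            \big[Rplus/0]_(k < n | (k <= m)%N && (k != m)) u k.
    apply: eq_bigl => k. rewrite hv.
    have hm0 : (0 < val m)%N by rewrite lt0n.
    rewrite -(ltnS k) (prednK hm0) ltn_neqAle andbC. done.
  toR. ring.
Qed.
End LA.

Section LA2.
Variable n : nat.
Hypothesis hn : (3 <= n)%N.

Definition cc (x : pt n) m := Tv x (ipred m) + Tv x m.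

Lemma cc_pos (x : pt n) m : goodx x -> 0 < cc x m.
Proof.
move=> hg. rewrite /cc. have := good_T (hg m). have := good_T (hg (ipred m)).
move=> [_ [_ h1]] [_ [_ h2]]. lra.
Qed.

Lemma xi_inl_sum (x : pt n) (a : 'I_n -> R) m :
  \Sum_(i < n) (a i * xi i x (inl m)) = a m.
Proof.
rewrite -(sum_ind' m a). apply: eq_bigr => i _ /=. toR. by rewrite Rmult_comm.
Qed.

Lemma xi_inr_sum (x : pt n) (a : 'I_n -> R) m :
  \Sum_(i < n) (a i * xi i x (inr m)) = a m * Phi x m.
Proof.
rewrite -(sum_ind' m (fun i => a i * Phi x i)). apply: eq_bigr => i _ /=. toR.
case: (m == i); ring.
Qed.

Lemma inD2_fwd (x : pt n) v : goodx x -> inD2 x v -> Lform x v = 0.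
Proof.
move=> hg [a [b H]].
have Hl : forall m, v (inl m) = a m.
  move=> m. rewrite H.
  have -> : \Sum_(i < n) \Sum_(j < n) (b i j * lie (xi i) (xi j) x (inl m)) = 0.
    apply: big1 => i _; apply: big1 => j _. rewrite lie_inl. toR. ring.
  rewrite Rplus_0_r. exact: xi_inl_sum.
have Hr : forall m, v (inr m) - Phi x m * v (inl m) =
   \Sum_(i < n) \Sum_(j < n) (b i j * (indR (m == j) * Xpd x i j - indR (m == i) * Xpd x j i)).
  move=> m. rewrite Hl H xi_inr_sum.
  have -> : \Sum_(i < n) \Sum_(j < n) (b i j * lie (xi i) (xi j) x (inr m)) =
     \Sum_(i < n) \Sum_(j < n) (b i j * (indR (m == j) * Xpd x i j - indR (m == i) * Xpd x j i)).
    apply: eq_bigr => i _; apply: eq_bigr => j _. by rewrite lie_inr.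
  toR. ring.
rewrite /Lform.
transitivity (\Sum_(m < n) \Sum_(i < n) \Sum_(j < n)
   (cc x m * (b i j * (indR (m == j) * Xpd x i j - indR (m == i) * Xpd x j i)))).
  apply: eq_bigr => m _. rewrite Hr -sumR_mull. apply: eq_bigr => i _.
  rewrite -sumR_mull. done.
rewrite exchange_big /=.
apply: big1 => i _. rewrite exchange_big /=. apply: big1 => j _.
transitivity (\Sum_(m < n) ((if m == j then 1 else 0) * (b i j * cc x m * Xpd x i j)
   - (if m == i then 1 else 0) * (b i j * cc x m * Xpd x j i))).
  apply: eq_bigr => m _. rewrite /indR. toR. case: (m == j); case: (m == i); ring.
rewrite sumR_minus !sum_ind.
have := key_sym hn i j hg. rewrite /cc. move=> h.
have gen : forall B c1 c2 X1 X2 : R, c1 * X1 = c2 * X2 -> B * c1 * X1 - B * c2 * X2 = 0.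
  move=> B c1 c2 X1 X2 e. rewrite Rmult_assoc Rmult_assoc e. ring.
exact: gen.
Qed.
End LA2.

Section LA3.
Variable n : nat.
Hypothesis hn : (3 <= n)%N.

Lemma inD2_bwd (x : pt n) v : goodx x -> (forall i, Xpd x i (isucc i) <> 0) ->
  Lform x v = 0 -> inD2 x v.
Proof.
move=> hg hX hL.
pose w m := v (inr m) - Phi x m * v (inl m).
pose u m := cc x m * w m.
pose g (i : 'I_n) := - \big[Rplus/0]_(k < n | (k <= i)%N) u k.
pose be i := g i / (Xpd x i (isucc i) * cc x (isucc i)).
exists (fun i => v (inl i)), (fun i j => if j == isucc i then be i else 0).
case => m.
- rewrite xi_inl_sum.
  have -> : \Sum_(i < n) \Sum_(j < n) ((if j == isucc i then be i else 0) * lie (xi i) (xi j) x (inl m)) = 0.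
    apply: big1 => i _; apply: big1 => j _. rewrite lie_inl. toR. ring.
  toR. ring.
- rewrite xi_inr_sum.
  have E1 : forall i, \Sum_(j < n) ((if j == isucc i then be i else 0) * lie (xi i) (xi j) x (inr m))
     = be i * (indR (m == isucc i) * Xpd x i (isucc i) - indR (m == i) * Xpd x (isucc i) i).
    move=> i. rewrite -(sum_ind (isucc i) (fun j => be i * (indR (m == j) * Xpd x i j - indR (m == i) * Xpd x j i))).
    apply: eq_bigr => j _. rewrite lie_inr. toR. case: (j == isucc i); ring.
  rewrite (eq_bigr _ (fun i _ => E1 i)).
  have E2 : forall i, be i * (indR (m == isucc i) * Xpd x i (isucc i) - indR (m == i) * Xpd x (isucc i) i)
     = (if i == ipred m then 1 else 0) * (be i * Xpd x i (isucc i))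
       - (if i == m then 1 else 0) * (be i * Xpd x (isucc i) i).
    move=> i. have -> : (m == isucc i) = (i == ipred m).
      apply/eqP/eqP => [->|->]; [by rewrite pred_succ | by rewrite succ_pred].
    rewrite /indR [m == i]eq_sym. toR. case: (i == ipred m); case: (i == m); ring.
  rewrite (eq_bigr _ (fun i _ => E2 i)) sumR_minus !sum_ind succ_pred.
  have hpre := @prefix_diff n hn u m hL.
  rewrite -/(g (ipred m)) -/(g m) in hpre.
  have hks := key_sym hn m (isucc m) hg. rewrite pred_succ in hks.
  have hc0 := cc_pos m hg. have hc1 := cc_pos (isucc m) hg. rewrite /cc pred_succ in hc1.
  have hX1 := hX (ipred m). rewrite succ_pred in hX1.
  have hX2 := hX m.
  rewrite /be succ_pred. rewrite /u /w in hpre.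
  rewrite /cc in hc0 hc1 hpre.
  move: (g (ipred m)) (g m) hpre => G1 G2 hpre.
  move: (Xpd x (ipred m) m) (Xpd x m (isucc m)) (Xpd x (isucc m) m) hX1 hX2 hks => X1 X2 X3 hX1 hX2 hks.
  rewrite /cc pred_succ. move: (Tv x (ipred m) + Tv x m) (Tv x m + Tv x (isucc m)) hc0 hc1 hpre hks.
  move=> c0 c1 hc0 hc1 hpre hks.
  have e3 : X3 = c1 * X2 / c0 by rewrite hks; field; lra.
  rewrite e3. toR.
  have e4 : v (inr m) = v (inl m) * Phi x m + (G1 - G2) / c0.
    rewrite hpre. field. lra.
  rewrite e4. move: (v (inl m) * Phi x m) => Z. field. repeat split; try lra; assumption.
Qed.
End LA3.

Definition XT n (x : pt n) (i : 'I_n) : R :=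
  - (Fta (Tv x i) (Tv x (isucc i)) (pp x i) (pp x (isucc i)) (pp x (isucc (isucc i))) * (1 + Tv x i ^ 2) / 2)
  + FF (Tv x (ipred i)) (Tv x i) (pp x (ipred i)) (pp x i) (pp x (isucc i)) * Fq0 (Tv x i) (Tv x (isucc i)).

Lemma C_Tv n (x : pt n) k : 0 < dal x k < PI -> Ct (fun y => Tv y k) x.
Proof.
move=> h. have hs : sin (dal x k) <> 0.
  apply Rgt_not_eq; case: h => h1 h2; exact: sin_gt_0.
rewrite /Tv. apply: C_div => //. apply: C_minus; [apply: C_const | apply: C_cos; apply: C_dal].
apply: C_sin; apply: C_dal.
Qed.

Ltac Cstep2 := match goal with
 | |- Ct (fun y => Tv y _) _ => apply C_Tv
 | |- Ct (fun y => pp y _) _ => apply C_coord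
 | |- Ct (fun y => _ + _) _ => apply C_plus
 | |- Ct (fun y => _ - _) _ => apply C_minus
 | |- Ct (fun y => _ / _) _ => apply C_div
 | |- Ct (fun y => _ * _) _ => apply C_mult
 | |- Ct (fun y => - _) _ => apply C_opp
 | |- Ct (fun y => _ ^ _) _ => apply C_pow
 | |- Ct (fun y => ?c) _ => apply C_const
 end.

Section Main.
Variable n : nat.
Hypothesis hn : (3 <= n)%N.

Lemma Xpd_XT (x : pt n) i : goodx x -> Xpd x i (isucc i) = XT x i.
Proof.
move=> hg. rewrite /Xpd pd_Phi_l // pd_Phi_r //.
have e1 : (isucc i == i) = false by apply: negbTE; exact: succ_neq.
have e2 : (isucc (isucc i) == i) = false by apply: negbTE; exact: succ2_neq.
rewrite /indR !pred_succ !eqxx e1 e2 (Phi_T (hg _) (hg _)) /DAj /DBj /XT !pred_succ.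
move: (Fta _ _ _ _ _) (Ftb _ _ _ _ _) (FF _ _ _ _ _) (Fq0 _ _) (Fq1 _ _) (Fq2 _ _) => A B C D E F.
move: (Tv x i) (Tv x (isucc i)) => a b. ring.
Qed.

Lemma C_XT (x : pt n) i : goodx x -> Ct (fun y => XT y i) x.
Proof.
move=> hg. rewrite /XT /Fta /FF /Fq0 /NN.
have t0 : 0 < Tv x (ipred i) by case: (good_T (hg (ipred i))) => _ [].
have t1 : 0 < Tv x i by case: (good_T (hg i)) => _ [].
have t2 : 0 < Tv x (isucc i) by case: (good_T (hg (isucc i))) => _ [].
repeat Cstep2; try exact: hg; cbv beta; apply Rgt_not_eq; nra.
Qed.

Definition Uset (x : pt n) : Prop := forall i, (0 < dal x i < PI) /\ XT x i <> 0.

Lemma Uset_open : open_pt Uset.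
Proof.
move=> x hU.
have hg : goodx x by move=> i; exact: (hU i).1.
have : nb x Uset.
  apply: (@filter_forall_fin _ _ (nb_filter x)) => i.
  apply: (@filter_and _ _ (nb_filter x)).
  - apply: (@filter_and _ _ (nb_filter x)).
    + apply: (@C_ev_gt n (fun y => dal y i)); [exact: C_dal | exact: (hU i).1.1].
    + apply: (@C_ev_lt n (fun y => dal y i)); [exact: C_dal | exact: (hU i).1.2].
  - apply: (@C_ev_neq n (fun y => XT y i)); [exact: C_XT | exact: (hU i).2].
done.
Qed.
End Main.

Section G0.
Variable n : nat.
Hypothesis hn : (3 <= n)%N.

Lemma INR_n3 : 3 <= INR n.
Proof.
have h : (3 <= n)%coq_nat by apply/leP.
have := le_INR _ _ h. rewrite /=. lra.
Qed.

Lemma dal_g0 t i : dal (gamma0 n t) i = 2 * PI / INR n.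
Proof.
have hn3 := INR_n3.
rewrite /dal /alpha /=.
have hi := ltn_ord i.
case: eqP => [h|h].
- rewrite h modnn. have e : INR (i.+1) = INR n by rewrite h. rewrite S_INR in e.
  replace (INR i) with (INR n - 1) by lra. rewrite /=. field. lra.
- rewrite modn_small; first by rewrite S_INR; field; lra.
  rewrite ltn_neqAle hi andbT. by apply/eqP.
Qed.

Lemma g0_in_U t : Uset (gamma0 n t).
Proof.
have hn3 := INR_n3.
have hpi := PI_RGT_0.
have hd : forall i, 0 < dal (gamma0 n t) i < PI.
  move=> i. rewrite dal_g0. split.
  - apply Rdiv_lt_0_compat; lra.
  - apply (Rmult_lt_reg_r (INR n)); first lra.
    rewrite /Rdiv Rmult_assoc Rinv_l; nra.
move=> i. split; first exact: hd.
have tp : 0 < Tv (gamma0 n t) i by case: (good_T (hd i)) => _ [].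
pose T0 := Tv (gamma0 n t) i.
have hT : forall k, Tv (gamma0 n t) k = T0.
  move=> k. by rewrite /T0 /Tv !dal_g0.
rewrite /XT !hT. rewrite -/T0 in tp. clearbody T0.
rewrite /pp /=.
clear hT. move: T0 tp => T tp.
rewrite /Fta /FF /Fq0 /NN.
match goal with |- ?e <> 0 => replace e with ((1 + T^2)/2) by (field; lra) end.
apply Rgt_not_eq. nra.
Qed.
End G0.

Unset Implicit Arguments.
Theorem mainTheorem9 (n : nat) (hn : (3 <= n)%N) :
  exists U : pt n -> Prop,
    open_pt U /\
    (forall t : R, (0 <= t <= 1)%R -> U (gamma0 n t)) /\
    (forall x : pt n, U x -> in_Cn x ->
       forall v : pt n, inD2 x v <-> tangentCn x v).
Proof.
exists (@Uset n). split; [exact: Uset_open|split].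
- move=> t _. exact: g0_in_U.
- move=> x hU [hP _] v.
  have hg : goodx x by move=> i; exact: (hU i).1.
  rewrite tangent_iff //. split.
  + exact: inD2_fwd.
  + apply: inD2_bwd => // i. rewrite Xpd_XT //. exact: (hU i).2.
Qed.
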